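(* Assume $\overline{c}>p$. Then there exist constants $K_2>0$ and $K_3>0$ such that $$V(x,c_1)-V(x,c_2)\le\left[K_2+\frac{K_3x}{(c_1-p)^2}\right](c_2-c_1)$$ for all $x\ge0$ and $p<c_1\le c_2\le\overline{c}$.
   Context: Cramér–Lundberg model: the uncontrolled surplus is $X_t=x+pt-\sum_{i=1}^{N_t}U_i$, where $x\ge0$ is the initial surplus, $p>0$ the premium rate, $N_t$ a Poisson process with intensity $\beta>0$, and the claims $U_i$ are i.i.d. positive random variables, independent of $N$, with continuous distribution function $F$; $p>\beta\mathbb{E}[U_1]$. Standing assumption (A1): $F$ is globally Lipschitz, $0\le F(y)-F(x)\le K(y-x)$ for $x<y$. Let $(\mathcal{F}_t)$ be the completed filtration generated by $X$. Fix $\overline{c}>0$ and $q>0$. $\Pi_{x,c,\overline{c}}$ is the set of càdlàg, adapted, non-decreasing processes $C$ with $c\le C_t\le\overline{c}$; $X^C_t=X_t-\int_0^tC_sds$ ($X_0=x$), $\tau=\inf\{t\ge0:X^C_t<0\}$, $J(x;C)=\mathbb{E}[\int_0^\tau e^{-qs}C_sds]$, $V(x,c)=\sup_{C\in\Pi_{x,c,\overline{c}}}J(x;C)$. *)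

(* Defs.v *)
From HB Require Import structures.
From mathcomp Require Import all_boot all_order all_algebra.
From mathcomp Require Import all_classical all_reals all_analysis.
Set Implicit Arguments. Unset Strict Implicit. Unset Printing Implicit Defensive.
Import Order.TTheory GRing.Theory Num.Theory.
Import numFieldNormedType.Exports.
Local Open Scope classical_set_scope.
Local Open Scope ring_scope.

Section CramerLundberg.
Context {R : realType} {d : measure_display} {T : measurableType d}
  (P : probability T R).

Definition mutual_indep (I : eqType) (S : set I) (X : I -> T -> R) : Prop :=
  (forall i, S i -> measurable_fun setT (X i)) /\
  forall (J : seq I) (B : I -> set R), uniq J -> (forall i, i \in J -> S i) ->
    (forall i, measurable (B i)) ->
    fine (P [set w | forall i, i \in J -> B i (X i w)]) =
    \prod_(i <- J) fine (P (X i @^-1` B i)).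

(* Independence of two families (i.e. of the sigma-algebras they generate),
   stated on finite-dimensional cylinder events. *)
Definition indep_families (I1 I2 : eqType) (X1 : I1 -> T -> R)
    (X2 : I2 -> T -> R) : Prop :=
  forall (J1 : seq I1) (J2 : seq I2) (B1 : I1 -> set R) (B2 : I2 -> set R),
    (forall i, measurable (B1 i)) -> (forall i, measurable (B2 i)) ->
    let A1 := [set w | forall i, i \in J1 -> B1 i (X1 i w)] in
    let A2 := [set w | forall i, i \in J2 -> B2 i (X2 i w)] in
    fine (P (A1 `&` A2)) = fine (P A1) * fine (P A2).

Definition poisson_process (beta : R) (N : R -> T -> nat) : Prop :=
  [/\ (forall w, N 0 w = 0%N),
      (forall w s t, 0 <= s -> s <= t -> (N s w <= N t w)%N),
      (forall w t, 0 <= t -> exists2 delta : R, 0 < delta &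
          forall s, t <= s -> s < t + delta -> N s w = N t w),
      (forall (n : nat) (t : nat -> R), 0 <= t 0%N ->
          (forall k, t k < t k.+1) ->
          mutual_indep [set k | (k < n)%N]
            (fun k w => (N (t k.+1) w)%:R - (N (t k) w)%:R)) &
      (forall s t (k : nat), 0 <= s -> s <= t ->
          fine (P [set w | (N t w - N s w)%N = k]) =
          expR (- (beta * (t - s))) * (beta * (t - s)) ^+ k / (k`!)%:R)].

Definition CL_model (beta : R) (F : R -> R) (N : R -> T -> nat)
    (U : nat -> T -> R) : Prop :=
  [/\ poisson_process beta N,
      (forall t, measurable_fun setT (fun w => (N t w)%:R : R)),
      mutual_indep setT U,
      (forall n w, 0 < U n w) /\
      (forall n y, F y = fine (P [set w | U n w <= y])) &
      indep_families U (fun t w => (N t w)%:R)].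

(* Uncontrolled surplus X_t = x + p t - sum_{i=1}^{N_t} U_i
   (claims indexed from 0 here). *)
Definition surplus (x p : R) (N : R -> T -> nat) (U : nat -> T -> R)
    (t : R) (w : T) : R :=
  x + p * t - \sum_(i < N t w) U i w.

Definition nat_filtration (x p : R) N U (t : R) : set (set T) :=
  [set A | exists2 B,
     <<s [set E | exists s (G : set R), [/\ 0 <= s, s <= t, measurable G &
            E = surplus x p N U s @^-1` G]] >> B &
     P.-negligible ((A `\` B) `|` (B `\` A))].

Definition admissible (x p : R) N U (c cbar : R) : set (R -> T -> R) :=
  [set C | [/\
     (forall t (G : set R), 0 <= t -> measurable G ->
         nat_filtration x p N U t (C t @^-1` G)),
     (forall w t, 0 <= t -> C s w @[s --> t^'+] --> C t w),
     (forall w t, 0 < t -> cvg (C s w @[s --> t^'-])),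
     (forall w s t, 0 <= s -> s <= t -> C s w <= C t w) &
     (forall w t, 0 <= t -> c <= C t w /\ C t w <= cbar)]].

Definition controlled_surplus (x p : R) N U (C : R -> T -> R) (t : R) (w : T)
  : R :=
  surplus x p N U t w - Rintegral lebesgue_measure `[0, t] (fun s => C s w).

Definition ruin_time (x p : R) N U (C : R -> T -> R) (w : T) : \bar R :=
  ereal_inf [set t%:E | t in [set t | 0 <= t /\
                                      controlled_surplus x p N U C t w < 0]].

Definition value_J (q x p : R) N U (C : R -> T -> R) : \bar R :=
  (\int[P]_w (\int[lebesgue_measure]_(s in
      [set s : R | (0 <= s)%R /\ (s%:E < ruin_time x p N U C w)%E])
        (expR (- (q * s)) * C s w)%R%:E))%E.

Definition value_V (q cbar x p : R) N U (c : R) : \bar R :=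
  ereal_sup [set value_J q x p N U C | C in admissible x p N U c cbar].

End CramerLundberg.

(* Main.v *)
Require Import Defs.
From HB Require Import structures.
From mathcomp Require Import all_boot all_order all_algebra.
From mathcomp Require Import all_classical all_reals all_analysis.
From mathcomp Require Import measurable_realfun.
From mathcomp Require Import ring lra.
Import Order.TTheory GRing.Theory Num.Theory.
Import numFieldNormedType.Exports.
Local Open Scope classical_set_scope.
Local Open Scope ring_scope.
Set Implicit Arguments. Unset Strict Implicit. Unset Printing Implicit Defensive.

Import HBNNSimple.
Lemma bounded_by (R : realType) (A : set R) (f : R -> R) (B : R) :
  (forall s, A s -> `|f s| <= B) -> [bounded f s | s in A].
Proof.
move=> hB; exists B; split; first by rewrite num_real.
move=> M BM s As /=; rewrite (le_trans (hB s As)) // ltW //.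
Qed.

Lemma Rint_le (R : realType) (A : set R) (f g : R -> R) (k B : R) :
  measurable A -> (lebesgue_measure A < +oo)%E ->
  measurable_fun A f -> measurable_fun A g ->
  (forall s, A s -> `|f s| <= B) -> (forall s, A s -> `|g s| <= B) ->
  (forall s, A s -> f s <= g s + k) ->
  Rintegral lebesgue_measure A f <=
  Rintegral lebesgue_measure A g + k * fine (lebesgue_measure A).
Proof.
move=> mA Afin mf mg bf bg fg.
have intf := @measurable_bounded_integrable _ _ _ lebesgue_measure f A mA Afin mf (bounded_by bf).
have intg := @measurable_bounded_integrable _ _ _ lebesgue_measure g A mA Afin mg (bounded_by bg).
have intk : lebesgue_measure.-integrable A (EFin \o (fun _ : R => k)).
  apply: (@measurable_bounded_integrable _ _ _ lebesgue_measure _ A mA Afin).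
    exact: measurable_cst.
  exact: (@bounded_by _ _ _ `|k|).
rewrite -Rintegral_cst // -RintegralD //.
apply: le_Rintegral => //.
apply: (@measurable_bounded_integrable _ _ _ lebesgue_measure _ A mA Afin).
  by apply: measurable_funD => //; exact: measurable_cst.
apply: (@bounded_by _ _ _ (B + `|k|)) => s As.
by rewrite (le_trans (ler_normD _ _)) // lerD2r bg.
Qed.

Lemma leb_itv0 (R : realType) (t : R) : 0 <= t ->
  fine (lebesgue_measure (`[0, t] : set R)) = t.
Proof.
move=> t0; rewrite lebesgue_measure_itv /=.
case: ifPn => //=; rewrite lte_fin => h; first by rewrite subr0.
by apply/eqP; rewrite eq_le t0 /= leNgt.
Qed.

Lemma meas_mono (R : realType) (D : set R) (g : R -> R) :
  measurable D -> D `<=` [set s | 0 <= s] ->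
  (forall s t, 0 <= s -> s <= t -> g s <= g t) -> measurable_fun D g.
Proof.
move=> mD D0 hg.
have : measurable_fun D (fun s => g (Num.max s 0)).
  apply: nondecreasing_measurable => // s t st.
  apply: hg; first by rewrite le_max lexx orbT.
  by rewrite ge_max !le_max st lexx /= orbT.
apply: eq_measurable_fun => s; rewrite inE => /D0 /= s0.
by rewrite max_l.
Qed.
Lemma itvcoE (R : realType) (u v : R) :
  [set s : R | u <= s /\ s < v] = [set` `[u, v[].
Proof.
apply/seteqP; split => s /=; rewrite in_itv /=; first by move=> [-> ->].
by move=> /andP[-> ->].
Qed.

Lemma leb_co (R : realType) (u v : R) : u <= v ->
  lebesgue_measure [set s : R | u <= s /\ s < v] = (v - u)%:E.
Proof.
move=> uv; rewrite itvcoE lebesgue_measure_itv /= lte_fin.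
case: ltP => //= vu; apply/eqP; rewrite eq_sym; apply/eqP; congr EFin.
by apply/eqP; rewrite subr_eq0 eq_le uv vu.
Qed.

Lemma inner_le (R : realType) (a b cb : R) (phi phi' : R -> R) :
  0 <= a -> 0 <= b -> 0 <= cb ->
  measurable_fun [set s : R | 0 <= s] phi -> measurable_fun [set s : R | 0 <= s] phi' ->
  (forall s, 0 <= s -> 0 <= phi s /\ phi s <= cb /\ phi s <= phi' s) ->
  (\int[lebesgue_measure]_(s in [set s : R | (0 <= s /\ s < a)%R]) (phi s)%:E <=
   \int[lebesgue_measure]_(s in [set s : R | (0 <= s /\ s < b)%R]) (phi' s)%:E
     + (cb * Num.max (a - b) 0)%:E)%E.
Proof.
move=> a0 b0 cb0 mphi mphi' hphi.
set m := Num.max a b.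
have mS u v : measurable [set s : R | u <= s /\ s < v].
  by rewrite itvcoE; exact: measurable_itv.
have mge0 : measurable [set s : R | 0 <= s].
  rewrite (_ : [set s : R | 0 <= s] = [set` `[0, +oo[]); first exact: measurable_itv.
  by apply/seteqP; split => s /=; rewrite in_itv /= andbT.
have m0 : 0 <= m by rewrite le_max a0.
have S0 u v : 0 <= u -> [set s : R | u <= s /\ s < v] `<=` [set s : R | 0 <= s].
  by move=> u0 s [us _]; exact: le_trans us.
have mE (f : R -> R) u v : 0 <= u -> measurable_fun [set s : R | 0 <= s] f ->
    measurable_fun [set s : R | u <= s /\ s < v] (fun s => (f s)%:E).
  move=> u0 mf; apply/measurable_EFinP; apply: measurable_funS mf => //.
  exact: S0.
have phi0 s : 0 <= s -> (0 <= (phi s)%:E)%E by move=> /hphi[? _]; rewrite lee_fin.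
apply: (@le_trans _ _ (\int[lebesgue_measure]_(s in [set s : R | (0 <= s /\ s < m)%R]) (phi s)%:E)%E).
  apply: ge0_subset_integral => //; try exact: mS.
  - exact: mE.
  - by move=> s [s0 _]; exact: phi0.
  - by move=> s [s0 sa]; split => //; rewrite lt_max sa.
have -> : [set s : R | 0 <= s /\ s < m] =
    [set s : R | 0 <= s /\ s < b] `|` [set s : R | b <= s /\ s < m].
  apply/seteqP; split => s /=.
    move=> [s0 sm]; case: (ltP s b) => sb; [left|right]; by [].
  case=> [[s0 sb]|[bs sm]]; split => //.
  - by rewrite lt_max sb orbT.
  - exact: le_trans bs.
rewrite ge0_integral_setU //; try exact: mS; last 3 first.
- apply/measurable_EFinP; apply: measurable_funS mphi => //.
  by move=> s [[s0 _]|[bs _]] //=; exact: le_trans bs.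
- move=> s [[s0 _]|[bs _]]; apply: phi0 => //; exact: le_trans bs.
- by rewrite disj_set2E; apply/eqP/seteqP; split => s //= [[_ sb] [bs _]];
    move: sb; rewrite ltNge bs.
apply: leeD.
  apply: ge0_le_integral => //; try exact: mS.
  - by move=> s [s0 _]; exact: phi0.
  - exact: mE.
  - exact: mE.
  - by move=> s [s0 _]; rewrite lee_fin; have [_ [_ ->]] := hphi s s0.
apply: (@le_trans _ _ (\int[lebesgue_measure]_(s in [set s : R | (b <= s /\ s < m)%R]) (cst cb%:E) s)%E).
  apply: ge0_le_integral => //; try exact: mS.
  - by move=> s [bs _]; apply: phi0; exact: le_trans bs.
  - exact: mE.
  - by move=> s [bs _]; rewrite lee_fin; have [_ [-> _]] := hphi s (le_trans b0 bs).
rewrite integral_cst //; last exact: mS.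
set L := (X in (cb%:E * X <= _)%E).
have -> : L = (m - b)%:E by apply: leb_co; rewrite le_max lexx orbT.
rewrite -EFinM lee_fin ler_wpM2l //.
rewrite /m; case: (leP a b) => ab.
  by rewrite subrr le_max lexx orbT.
by rewrite le_max lexx.
Qed.

Lemma inf_real (R : realType) (A : set R) t0 : A t0 -> (forall t, A t -> 0 <= t) ->
  exists r, [/\ ereal_inf [set t%:E | t in A] = r%:E, 0 <= r,
    (forall t, A t -> r <= t) &
    (forall l, (forall t, A t -> l <= t) -> l <= r)].
Proof.
move=> At0 A0.
set e := ereal_inf _.
have e0 : (0 <= e)%E.
  by apply: le_ereal_inf_tmp => _ [t At <-]; rewrite lee_fin; exact: A0.
have et0 : (e <= t0%:E)%E by apply: ereal_inf_lbound; exists t0.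
have ef : e \is a fin_num by rewrite ge0_fin_numE // (le_lt_trans et0) // ltry.
exists (fine e); rewrite fineK //; split => //.
- by rewrite -lee_fin fineK.
- move=> t At; rewrite -lee_fin fineK //; apply: ereal_inf_lbound; by exists t.
- move=> l hl; rewrite -lee_fin fineK //; apply: le_ereal_inf_tmp => _ [t At <-].
  by rewrite lee_fin; exact: hl.
Qed.

Section path.
Context (R : realType) (d : measure_display) (T : measurableType d)
  (x p : R) (N : R -> T -> nat) (U : nat -> T -> R) (C : R -> T -> R) (w : T)
  (c1 c2 cbar : R).
Hypotheses (hp : 0 < p) (hc1 : p < c1) (c12 : c1 <= c2) (c2b : c2 <= cbar)
  (hx : 0 <= x)
  (hN : forall s t, 0 <= s -> s <= t -> (N s w <= N t w)%N)
  (hU : forall n, 0 < U n w)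
  (hM : forall s t, 0 <= s -> s <= t -> C s w <= C t w)
  (hB : forall t, 0 <= t -> c1 <= C t w /\ C t w <= cbar).

Let C' := fun t w => Num.max (C t w) c2.

Lemma sum_mono n m : (n <= m)%N -> \sum_(i < n) U i w <= \sum_(i < m) U i w.
Proof.
move=> nm; rewrite -(subnKC nm) big_split_ord /= lerDl.
by apply: sumr_ge0 => i _; exact: ltW.
Qed.

Lemma C_meas (D : set R) (D' : R -> T -> R) : measurable D -> D `<=` [set s | 0 <= s] ->
  (forall s t, 0 <= s -> s <= t -> D' s w <= D' t w) ->
  measurable_fun D (fun s => D' s w).
Proof. by move=> mD D0 hD; apply: meas_mono. Qed.

Lemma C'_mono s t : 0 <= s -> s <= t -> C' s w <= C' t w.
Proof.
move=> s0 st; rewrite /C' ge_max !le_max lexx !orbT andbT.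
by rewrite (hM s0 st).
Qed.

Lemma C_abs t : 0 <= t -> `|C t w| <= cbar.
Proof.
move=> t0; have [h1 h2] := hB t0.
by rewrite ger0_norm // (le_trans _ h1) // ltW // (lt_trans hp).
Qed.

Lemma C'_abs t : 0 <= t -> `|C' t w| <= cbar.
Proof.
move=> t0; have [h1 h2] := hB t0.
rewrite ger0_norm /C'; first by rewrite ge_max h2 c2b.
by rewrite le_max (le_trans _ h1) // ltW // (lt_trans hp).
Qed.

Lemma leb_itv_fin (u v : R) (b1 b2 : bool) :
  (lebesgue_measure ([set` Interval (BSide b1 u) (BSide b2 v)] : set R) < +oo)%E.
Proof.
rewrite lebesgue_measure_itv /=; case: ifPn => _ //.
by rewrite -EFinD ltry.
Qed.

Lemma sub0 (t : R) : 0 <= t -> (`[0, t] : set R) `<=` [set s | 0 <= s].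
Proof. by move=> t0 s /=; rewrite in_itv /= => /andP[]. Qed.

Lemma subts (t s : R) : 0 <= t -> (`]t, s] : set R) `<=` [set s | 0 <= s].
Proof. by move=> t0 u /=; rewrite in_itv /= => /andP[tu _]; rewrite (le_trans t0) // ltW. Qed.

Lemma c1_abs : `|c1| <= cbar.
Proof. by rewrite ger0_norm ?(le_trans c12) // ltW // (lt_trans hp). Qed.

Lemma int_a t : 0 <= t ->
  c1 * t <= Rintegral lebesgue_measure `[0, t] (fun s => C' s w).
Proof.
move=> t0.
have := @Rint_le R `[0, t] (fun _ => c1) (fun s => C' s w) 0 cbar (measurable_itv _)
  (leb_itv_fin _ _ _ _) (measurable_cst _)
  (C_meas (measurable_itv _) (sub0 t0) C'_mono)
  (fun _ _ => c1_abs) (fun s hs => C'_abs (sub0 t0 hs)).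
rewrite Rintegral_cst ?leb_itv0 // mul0r addr0; apply.
move=> s /sub0 - /(_ t0) s0; rewrite addr0 /C' le_max.
by have [-> _] := hB s0.
Qed.

Lemma int_b t : 0 <= t ->
  Rintegral lebesgue_measure `[0, t] (fun s => C' s w) <=
  Rintegral lebesgue_measure `[0, t] (fun s => C s w) + (c2 - c1) * t.
Proof.
move=> t0.
have := @Rint_le R `[0, t] (fun s => C' s w) (fun s => C s w) (c2 - c1) cbar (measurable_itv _)
  (leb_itv_fin _ _ _ _)
  (C_meas (measurable_itv _) (sub0 t0) C'_mono)
  (C_meas (measurable_itv _) (sub0 t0) hM)
  (fun s hs => C'_abs (sub0 t0 hs)) (fun s hs => C_abs (sub0 t0 hs)).
rewrite leb_itv0 //; apply.
move=> s /sub0 - /(_ t0) s0; rewrite /C' ge_max.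
have [h1 _] := hB s0.
apply/andP; split; first by rewrite lerDl subr_ge0.
lra.
Qed.

Lemma int_c t s : 0 <= t -> t <= s ->
  Rintegral lebesgue_measure `[0, t] (fun s => C s w) + c1 * (s - t) <=
  Rintegral lebesgue_measure `[0, s] (fun s => C s w).
Proof.
move=> t0 ts.
have s0 : 0 <= s := le_trans t0 ts.
have intC : lebesgue_measure.-integrable `[0, s] (EFin \o (fun u => C u w)).
  apply: (@measurable_bounded_integrable _ _ _ lebesgue_measure _ _ (measurable_itv _) (leb_itv_fin _ _ _ _)).
    exact: (C_meas (measurable_itv _) (sub0 s0) hM).
  exact: (bounded_by (fun u hu => C_abs (sub0 s0 hu))).
have := @Rintegral_itvB R (fun u => C u w) (BLeft 0) (BRight s) t intC.
rewrite !bnd_simp => /(_ t0 ts) E.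
rewrite -lerBrDl E.
have := @Rint_le R `]t, s] (fun _ => c1) (fun u => C u w) 0 cbar (measurable_itv _)
  (leb_itv_fin _ _ _ _) (measurable_cst _)
  (C_meas (measurable_itv _) (@subts t s t0) hM)
  (fun _ _ => c1_abs) (fun u hu => C_abs (@subts t s t0 u hu)).
rewrite Rintegral_cst // mul0r addr0.
have -> : fine (lebesgue_measure (`]t, s] : set R)) = s - t.
  rewrite lebesgue_measure_itv /= lte_fin.
  case: ltP => //= st; apply/eqP; rewrite eq_sym subr_eq0 eq_le ts /=.
  by rewrite andbT.
apply => u /subts - /(_ t0) u0; rewrite addr0.
by have [-> _] := hB u0.
Qed.

Lemma key_ruin t : 0 <= t -> controlled_surplus x p N U C' t w < 0 ->
  controlled_surplus x p N U C (t + (c2 - c1) / (c1 - p) * t) w < 0.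
Proof.
move=> t0; set D := (c2 - c1) / (c1 - p).
have cp : 0 < c1 - p by rewrite subr_gt0.
have D0 : 0 <= D by rewrite /D divr_ge0 // ?subr_ge0 // ltW.
have hd : (c1 - p) * D * t = (c2 - c1) * t.
  by rewrite /D mulrCA mulfV ?mulr1 // gt_eqF.
set s := t + D * t.
have ts : t <= s by rewrite /s lerDl mulr_ge0.
have S := sum_mono (hN t0 ts).
have Ic := int_c t0 ts.
have Ib := int_b t0.
rewrite /controlled_surplus /surplus.
move: S Ic Ib hd; rewrite /s.
set It := Rintegral lebesgue_measure `[0, t] (fun s => C s w).
set It' := Rintegral lebesgue_measure `[0, t] (fun s => C' s w).
set Is := Rintegral lebesgue_measure `[0, (t + D * t)] (fun s => C s w).
set St := \sum_(i < N t w) U i w.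
set Ss := \sum_(i < _) U i w.
move=> *; lra.
Qed.

Lemma ruin' t : x / (c1 - p) < t -> controlled_surplus x p N U C' t w < 0.
Proof.
have cp : 0 < c1 - p by rewrite subr_gt0.
move=> xt; have t0 : 0 <= t.
  by rewrite (le_trans _ (ltW xt)) // divr_ge0 // ltW.
move: xt; rewrite ltr_pdivrMr // => xt.
have Ia := int_a t0.
have S0 : 0 <= \sum_(i < N t w) U i w by apply: sumr_ge0 => i _; exact: ltW.
rewrite /controlled_surplus /surplus.
move: Ia S0 xt.
set I := Rintegral _ _ _.
set S := \sum_(i < _) U i w.
move=> *; lra.
Qed.

Lemma inner_bound q : 0 < q ->
  (\int[lebesgue_measure]_(s in [set s : R | (0 <= s)%R /\ (s%:E < ruin_time x p N U C w)%E])
      (expR (- (q * s)) * C s w)%R%:E <=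
   \int[lebesgue_measure]_(s in [set s : R | (0 <= s)%R /\ (s%:E < ruin_time x p N U C' w)%E])
      (expR (- (q * s)) * C' s w)%R%:E
   + (cbar * ((c2 - c1) * x / (c1 - p) ^+ 2))%:E)%E.
Proof.
move=> q0.
have cp : 0 < c1 - p by rewrite subr_gt0.
set D := (c2 - c1) / (c1 - p).
have D0 : 0 <= D by rewrite /D divr_ge0 // ?subr_ge0 // ltW.
set S' := [set t : R | 0 <= t /\ controlled_surplus x p N U C' t w < 0].
have mge0 : measurable [set s : R | 0 <= s].
  rewrite (_ : [set s : R | 0 <= s] = [set` `[0, +oo[]); first exact: measurable_itv.
  by apply/seteqP; split => s /=; rewrite in_itv /= andbT.
have emeas (E : set R) : measurable E -> measurable_fun E (fun s => expR (- (q * s))).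
  move=> mE; apply: nonincreasing_measurable => // s t st.
  by rewrite ler_expR lerN2 ler_wpM2l // ltW.
set S := [set t : R | 0 <= t /\ controlled_surplus x p N U C t w < 0].
have xp0 : 0 <= x / (c1 - p) by rewrite divr_ge0 // ltW.
set t1 := x / (c1 - p) + 1.
have t1S' : S' t1.
  split; first by rewrite /t1 addr_ge0.
  by apply: ruin'; rewrite /t1 ltrDl.
have [b [Eb b0 bl bg]] := @inf_real R S' t1 t1S' (fun t ht => ht.1).
have t1S : S (t1 + D * t1).
  have t10 : 0 <= t1 by rewrite /t1 addr_ge0.
  split; first by rewrite addr_ge0 // mulr_ge0.
  exact: key_ruin (t1S'.2).
have [a [Ea a0 al ag]] := @inf_real R S _ t1S (fun t ht => ht.1).
have bx : b <= x / (c1 - p).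
  rewrite leNgt; apply/negP => xb.
  set m := (x / (c1 - p) + b) / 2.
  have mS' : S' m.
    split; first by rewrite /m divr_ge0 // addr_ge0.
    by apply: ruin'; rewrite /m; lra.
  have := bl m mS'; rewrite /m; lra.
have aDb : a <= (1 + D) * b.
  have D1 : 0 < 1 + D by rewrite ltr_wpDr.
  have : a / (1 + D) <= b.
    apply: bg => t [t0 ht].
    rewrite ler_pdivrMr // mulrDr mulr1 mulrC.
    apply: al; split; first by rewrite addr_ge0 // mulr_ge0.
    exact: key_ruin.
  by rewrite ler_pdivrMr // mulrC.
rewrite /ruin_time -/S -/S' Ea Eb.
have setE (r : R) : [set s : R | (0 <= s)%R /\ (s%:E < r%:E)%E] = [set s : R | (0 <= s /\ s < r)%R].
  by apply/seteqP; split => s /=; rewrite lte_fin.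
rewrite !setE.
apply: le_trans.
  apply: (@inner_le R a b cbar (fun s => expR (- (q * s)) * C s w) (fun s => expR (- (q * s)) * C' s w)) => //.
  - by rewrite (le_trans _ c2b) // (le_trans _ c12) // ltW // (lt_trans hp).
  - apply: measurable_funM; first exact: (emeas _ mge0).
    exact: (C_meas mge0 (fun s h => h) hM).
  - apply: measurable_funM; first exact: (emeas _ mge0).
    exact: (C_meas mge0 (fun s h => h) C'_mono).
  - move=> s s0; have [h1 h2] := hB s0.
    have e0 : 0 < expR (- (q * s)) by exact: expR_gt0.
    have C0 : 0 <= C s w by rewrite (le_trans _ h1) // ltW // (lt_trans hp).
    split; first by rewrite mulr_ge0 // ltW.
    split.
      rewrite -[cbar]mul1r; apply: ler_pM => //.
      by rewrite expR_le1 oppr_le0 mulr_ge0 // ltW.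
    apply: ler_wpM2l; first exact: ltW.
    by rewrite /C' le_max lexx.
apply: leeD => //; rewrite lee_fin; apply: ler_wpM2l.
  by rewrite (le_trans _ c2b) // (le_trans _ c12) // ltW // (lt_trans hp).
have -> : (c2 - c1) * x / (c1 - p) ^+ 2 = D * (x / (c1 - p)).
  rewrite /D; field; exact: lt0r_neq0.
rewrite ge_max mulr_ge0 // andbT.
have : D * b <= D * (x / (c1 - p)) by rewrite ler_wpM2l.
lra.
Qed.

End path.

Section hm.
Context d (T : measurableType d) (R : realType) (h : {nnsfun T >-> R}) (M : R).
Import HBNNSimple.
Definition hm_fun := fun w => Num.max (h w - M) 0.
Lemma hm_meas : measurable_fun setT hm_fun.
Proof.
apply: measurable_maxr; last exact: measurable_cst.
apply: measurable_funB => //; exact: measurable_cst.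
Qed.
Lemma hm_fin : finite_set (range hm_fun).
Proof.
have -> : range hm_fun = (fun y => Num.max (y - M) 0) @` range h.
  by rewrite image_comp.
apply: finite_image; exact: fimfunP.
Qed.
Lemma hm_ge0 : forall w, 0 <= hm_fun w.
Proof. by move=> w; rewrite /hm_fun le_max lexx orbT. Qed.
HB.instance Definition _ := isMeasurableFun.Build d _ T R hm_fun hm_meas.
HB.instance Definition _ := FiniteImage.Build T R hm_fun hm_fin.
HB.instance Definition _ := isNonNegFun.Build T R hm_fun hm_ge0.
Definition hm_nnsfun : {nnsfun T >-> R} := hm_fun.
End hm.

Lemma outer_le d (T : measurableType d) (R : realType) (P : probability T R)
  (f g : T -> \bar R) (M : R) :
  0 <= M -> (forall w, (0 <= f w)%E) -> (forall w, (0 <= g w)%E) ->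
  (forall w, (f w <= g w + M%:E)%E) ->
  (\int[P]_w f w <= \int[P]_w g w + M%:E)%E.
Proof.
move=> M0 f0 g0 fg.
rewrite (ge0_integralTE _ f0); apply: ge_ereal_sup => _ [h /= hf <-].
pose hm := @hm_nnsfun _ _ _ h M.
pose cM := cst_nnsfun T (NngNum M0).
have hle : forall w, (h w <= (add_nnsfun hm cM) w)%R.
  move=> w /=; rewrite /hm_fun -lerBlDr le_max lexx //.
apply: (le_trans (le_sintegral P hle)).
rewrite sintegralD; apply: leeD.
  rewrite (ge0_integralTE _ g0); apply: ereal_sup_ubound; exists hm => //= w.
  rewrite /hm_fun; have := hf w; have := fg w; have := g0 w.
  case: (g w) => [r| |] //=; try by move=> *; rewrite leey.
  rewrite !lee_fin => r0 fr hfw.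
  have hr : ((h w)%:E <= (r + M)%:E)%E by exact: (le_trans hfw fr).
  rewrite ge_max r0 andbT lerBlDr -lee_fin //.
  idtac.
have E := integralT_nnsfun P cM.
apply: (@le_trans _ _ (\int[P]_x (cM x)%:E)%E); first by rewrite E.
rewrite /= integral_cst //.
set m := (X in (M%:E * X <= _)%E).
have -> : m = 1%E by exact: probability_setT.
by rewrite mule1.
Qed.

Lemma max_cont (R : realType) (c : R) : continuous (fun y : R => Num.max y c).
Proof.
move=> y; apply: (@continuous_max _ R^o (fun y => y) (fun _ => c)).
  exact: cvg_id.
exact: cvg_cst.
Qed.

Lemma adm_max (R : realType) (d : measure_display) (T : measurableType d)
  (P : probability T R) x p N U (c1 c2 cbar : R) (C : R -> T -> R) :
  c1 <= c2 -> c2 <= cbar -> admissible P x p N U c1 cbar C ->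
  admissible P x p N U c2 cbar (fun t w => Num.max (C t w) c2).
Proof.
move=> c12 c2b [hA hR hL hM hB]; split.
- move=> t G t0 mG.
  have mf : measurable_fun setT (fun y : R => Num.max y c2).
    by apply: measurable_maxr => //; exact: measurable_cst.
  have mG' : measurable [set y : R | G (Num.max y c2)].
    by have := mf measurableT G mG; rewrite setTI.
  exact: (hA t _ t0 mG').
- move=> w t t0; have := hR w t t0.
  by exact: (@continuous_cvg _ _ _ _ _ _ (fun y => Num.max y c2) _ (@max_cont R c2 _)).
- move=> w t t0; have /cvg_ex [l Hl] := hL w t t0.
  apply/cvg_ex; exists (Num.max l c2).
  by move: Hl; exact: (@continuous_cvg _ _ _ _ _ _ (fun y => Num.max y c2) _ (@max_cont R c2 _)).
- move=> w s t s0 st; rewrite ge_max !le_max lexx !orbT andbT.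
  by rewrite (hM w s t s0 st).
- move=> w t t0; have [h1 h2] := hB w t t0.
  by rewrite le_max lexx orbT ge_max h2 c2b.
Qed.

Theorem lemma9p4 (R : realType) (d : measure_display) (T : measurableType d)
    (P : probability T R) (p beta q cbar Klip : R) (F : R -> R)
    (N : R -> T -> nat) (U : nat -> T -> R) :
  0 < p -> 0 < beta -> 0 < q -> 0 < cbar ->
  CL_model P beta F N U ->
  continuous F ->
  (forall x y, x < y -> 0 <= F y - F x /\ F y - F x <= Klip * (y - x)) ->
  (beta%:E * (\int[P]_w (U 0%N w)%:E) < p%:E)%E ->
  p < cbar ->
  exists K2 K3 : R, [/\ 0 < K2, 0 < K3 &
    forall x c1 c2, 0 <= x -> p < c1 -> c1 <= c2 -> c2 <= cbar ->
      (value_V P q cbar x p N U c1 - value_V P q cbar x p N U c2 <=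
       ((K2 + K3 * x / (c1 - p) ^+ 2) * (c2 - c1))%:E)%E].
Proof.
move=> p0 beta0 q0 cbar0 hCL Fc Flip hnp pcb.
case: hCL => hPois hNmeas hUind [hUpos hF] hindep.
case: hPois => hN0 hNmono hNrc hNind hNdist.
exists 1, cbar; split => //.
move=> x c1 c2 x0 pc1 c12 c2b.
have cp : 0 < c1 - p by rewrite subr_gt0.
have M0 : 0 <= cbar * ((c2 - c1) * x / (c1 - p) ^+ 2).
  apply: mulr_ge0; first exact: ltW.
  apply: divr_ge0; last by apply: exprn_ge0; exact: ltW.
  by apply: mulr_ge0 => //; rewrite subr_ge0.
set M := cbar * ((c2 - c1) * x / (c1 - p) ^+ 2).
have key : (value_V P q cbar x p N U c1 <= value_V P q cbar x p N U c2 + M%:E)%E.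
  apply: ge_ereal_sup => _ [C hC <-].
  have hC' := adm_max c12 c2b hC.
  case: hC => hA hR hL hM hB.
  apply: (@le_trans _ _ (value_J P q x p N U (fun t w => Num.max (C t w) c2) + M%:E)%E).
    rewrite /value_J; apply: outer_le => //.
    - move=> w; apply: integral_ge0 => s [s0 _]; rewrite lee_fin.
      apply: mulr_ge0; first exact: expR_ge0.
      have [h1 _] := hB w s s0; exact: (le_trans (ltW (lt_trans p0 pc1)) h1).
    - move=> w; apply: integral_ge0 => s [s0 _]; rewrite lee_fin.
      apply: mulr_ge0; first exact: expR_ge0.
      have [h1 _] := hB w s s0; rewrite le_max; apply/orP; left.
      exact: (le_trans (ltW (lt_trans p0 pc1)) h1).
    - move=> w.
      exact: (@inner_bound R d T x p N U C w c1 c2 cbar p0 pc1 c12 c2b x0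
        (fun s t s0 st => hNmono w s t s0 st) (fun n => hUpos n w)
        (fun s t s0 st => hM w s t s0 st) (fun t t0 => hB w t t0) q q0).
  apply: leeD => //; apply: ereal_sup_ubound; by exists (fun t w => Num.max (C t w) c2).
have MR : M <= (1 + cbar * x / (c1 - p) ^+ 2) * (c2 - c1).
  have -> : (1 + cbar * x / (c1 - p) ^+ 2) * (c2 - c1) = M + (c2 - c1).
    by rewrite /M; ring.
  by rewrite lerDl subr_ge0.
move: key; case E2: (value_V P q cbar x p N U c2) => [r| |] key.
- rewrite leeBlDr //; apply: (le_trans key); rewrite -EFinD lee_fin.
  by move: MR; lra.
- by rewrite /= addeNy leNye.
- move: key; rewrite /= => key.
  have -> : value_V P q cbar x p N U c1 = -oo%E.
    by apply/eqP; rewrite -leeNy_eq.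
  by rewrite /= leNye.
Qed.
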